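(* Let $a$ be a smooth, positive, increasing function on $(0,\infty)$ and consider the two-dimensional Robertson–Walker spacetime with metric $ds^2=-dt^2+a^2(t)\,d\chi^2$, $t>0$, $\chi\in\mathbb{R}$. Let $\beta_0,\beta_1,\beta_2$ be the comoving worldlines $\chi=0$, $\chi=\chi_1$, $\chi=\chi_2$ respectively (each parametrized by $t$, which is its proper time). Consider any one of the following three configurations (in each, all events named are assumed to exist). Scenario I: Fix $\tau_0>0$. The spacelike geodesic $\Psi_0$ through $(\tau_0,0)$ orthogonal to $\beta_0$ meets $\beta_1$ at $(\tau_1,\chi_1)$ and $\beta_2$ at $(t^-,\chi_2)$; the spacelike geodesic $\Psi_1$ through $(\tau_1,\chi_1)$ orthogonal to $\beta_1$ meets $\beta_2$ at $(t^+,\chi_2)$. Let $v_{\mathrm{kin}1}$ be the kinematic velocity of $\beta_1$ relative to $\beta_0$ at proper time $\tau_0$, $v_{\mathrm{kin}3}$ the kinematic velocity of $\beta_2$ relative to $\beta_0$ at proper time $\tau_0$, and $v_{\mathrm{kin}2}$ the kinematic velocity of $\beta_2$ relative to $\beta_1$ at proper time $\tau_1$. Scenario II: The spacelike geodesic orthogonal to $\beta_0$ at $(t^-,0)$ meets $\beta_1$ at $(\tau_1,\chi_1)$; the spacelike geodesic orthogonal to $\beta_1$ at $(\tau_1,\chi_1)$ meets $\beta_2$ at $(\tau_2,\chi_2)$; and $(\tau_2,\chi_2)$ lies on the spacelike geodesic orthogonal to $\beta_0$ at $(t^+,0)$. Let $v_{\mathrm{kin}1}$ be the kinematic velocity of $\beta_1$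 relative to $\beta_0$ at proper time $t^-$, $v_{\mathrm{kin}2}$ that of $\beta_2$ relative to $\beta_1$ at proper time $\tau_1$, and $v_{\mathrm{kin}3}$ that of $\beta_2$ relative to $\beta_0$ at proper time $t^+$. Scenario III: Fix $\tau_0>0$. The spacelike geodesic orthogonal to $\beta_0$ at $(\tau_0,0)$ meets $\beta_1$ at $(t^+,\chi_1)$ and $\beta_2$ at $(\tau_2,\chi_2)$; the event $(\tau_2,\chi_2)$ lies on the spacelike geodesic orthogonal to $\beta_1$ at $(t^-,\chi_1)$. Let $v_{\mathrm{kin}1}$ be the kinematic velocity of $\beta_1$ relative to $\beta_0$ at proper time $\tau_0$, $v_{\mathrm{kin}2}$ that of $\beta_2$ relative to $\beta_1$ at proper time $t^-$, and $v_{\mathrm{kin}3}$ that of $\beta_2$ relative to $\beta_0$ at proper time $\tau_0$. Then in each scenario, $$1-v_{\mathrm{kin}3}^{2}=\frac{a^{2}(t^{-})}{a^{2}(t^{+})}\,(1-v_{\mathrm{kin}1}^{2})(1-v_{\mathrm{kin}2}^{2}).$$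
   Context: A comoving worldline is a curve $\chi=\text{const}$; its 4-velocity is $\partial_t$. For a comoving observer $\beta_j$ ($\chi=\chi_j$) at proper time $\tau$, the events ''spacelike (Fermi) simultaneous'' with $\beta_j(\tau)=(\tau,\chi_j)$ are those on the spacelike geodesic through $(\tau,\chi_j)$ orthogonal to $\partial_t$. If this geodesic meets a comoving particle with coordinate $\chi$ at the event $(t,\chi)$, the kinematic velocity of that particle relative to $\beta_j$ at proper time $\tau$ is defined as follows: parallel transport the particle's 4-velocity along this geodesic to $(\tau,\chi_j)$ and write the result uniquely as $\gamma(u+V)$ with $u=\partial_t$ the observer's 4-velocity, $V$ orthogonal to $u$, $\gamma=1/\sqrt{1-g(V,V)}$; then $V=v_{\mathrm{kin}}\,\frac{1}{a(\tau)}\partial_\chi$, and the scalar $v_{\mathrm{kin}}$ (possibly negative) is the kinematic velocity. It is known that $v_{\mathrm{kin}}=\mathrm{sgn}(\chi-\chi_j)\sqrt{1-a^2(t)/a^2(\tau)}$. *)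

(* Defs.v *)
From Stdlib Require Import Reals Lra.
From Coquelicot Require Import Coquelicot.
Open Scope R_scope.

Definition scale_factor (a : R -> R) : Prop :=
  (forall n t, 0 < t -> ex_derive_n a n t) /\
  (forall t, 0 < t -> 0 < a t) /\
  (forall x y, 0 < x -> x < y -> a x < a y).

(* Metric ds^2 = -dt^2 + a(t)^2 dchi^2.  Nonzero Christoffel symbols:
   Gamma^t_{chi chi} = a a',  Gamma^chi_{t chi} = Gamma^chi_{chi t} = a'/a. *)

Definition is_geodesic (a : R -> R) (T X dT dX : R -> R) (s1 : R) : Prop :=
  forall s, 0 <= s <= s1 ->
    0 < T s /\
    is_derive T s (dT s) /\ is_derive X s (dX s) /\
    is_derive dT s (- (a (T s) * Derive a (T s)) * (dX s) ^ 2) /\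
    is_derive dX s (- 2 * (Derive a (T s) / a (T s)) * dT s * dX s).

(* The spacelike geodesic through (tau, chij) orthogonal to d_t (the
   4-velocity of the comoving observer chi = chij), followed from
   parameter 0 to parameter s1 >= 0, where it reaches the event (t, chi). *)
Definition orth_geod_segment (a : R -> R) (tau chij t chi : R)
    (T X dT dX : R -> R) (s1 : R) : Prop :=
  0 <= s1 /\ is_geodesic a T X dT dX s1 /\
  T 0 = tau /\ X 0 = chij /\ dT 0 = 0 /\ dX 0 <> 0 /\
  T s1 = t /\ X s1 = chi.

Definition orth_meets (a : R -> R) (tau chij t chi : R) : Prop :=
  exists T X dT dX s1, orth_geod_segment a tau chij t chi T X dT dX s1.

Definition is_parallel (a : R -> R) (T dT dX W0 W1 : R -> R) (s1 : R) : Prop :=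
  forall s, 0 <= s <= s1 ->
    is_derive W0 s (- (a (T s) * Derive a (T s)) * dX s * W1 s) /\
    is_derive W1 s (- (Derive a (T s) / a (T s)) * (dT s * W1 s + dX s * W0 s)).

(* v is the kinematic velocity, relative to the comoving observer chi = chij
   at proper time tau, of the comoving particle chi, whose worldline meets the
   orthogonal spacelike geodesic at (t, chi): the particle's 4-velocity d_t,
   parallel transported along the geodesic back to (tau, chij), equals
   gamma (u + V) with u = d_t, V = v (1/a(tau)) d_chi, g(V,V) = v^2,
   gamma = 1/sqrt(1 - v^2). *)
Definition vkin (a : R -> R) (tau chij chi t v : R) : Prop :=
  exists T X dT dX s1 W0 W1,
    orth_geod_segment a tau chij t chi T X dT dX s1 /\
    is_parallel a T dT dX W0 W1 s1 /\
    W0 s1 = 1 /\ W1 s1 = 0 /\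
    v ^ 2 < 1 /\
    W0 0 = 1 / sqrt (1 - v ^ 2) /\
    W1 0 = (1 / sqrt (1 - v ^ 2)) * (v * / a tau).

(* Main.v *)
Require Import Defs.
From Stdlib Require Import Reals Lra.
From Coquelicot Require Import Coquelicot.
Open Scope R_scope.

Lemma dmult (f g : R -> R) x df dg : is_derive f x df -> is_derive g x dg ->
  is_derive (fun y => f y * g y) x (df * g x + f x * dg).
Proof. intros H1 H2. apply (is_derive_mult f g x df dg H1 H2). intros; apply Rmult_comm. Qed.

Lemma dcomp (f g : R -> R) x df dg : is_derive f (g x) df -> is_derive g x dg ->
  is_derive (fun y => f (g y)) x (df * dg).
Proof. intros H1 H2. rewrite Rmult_comm. apply (is_derive_comp f g x df dg H1 H2). Qed.

Lemma dplus (f g : R -> R) x df dg : is_derive f x df -> is_derive g x dg ->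
  is_derive (fun y => f y + g y) x (df + dg).
Proof. intros H1 H2. apply (is_derive_plus f g x df dg H1 H2). Qed.

Lemma dopp (f : R -> R) x df : is_derive f x df ->
  is_derive (fun y => - f y) x (- df).
Proof. intros H1. apply (is_derive_opp f x df H1). Qed.

Lemma dext (f : R -> R) x l l' : is_derive f x l -> l = l' -> is_derive f x l'.
Proof. intros H ->; exact H. Qed.

Lemma deriv_a a x : scale_factor a -> 0 < x -> is_derive a x (Derive a x).
Proof.
  intros [Hd _] Hx. apply Derive_correct. exact (Hd 1%nat x Hx).
Qed.

Lemma const_on (f : R -> R) s1 : 0 <= s1 ->
  (forall s, 0 <= s <= s1 -> is_derive f s 0) -> f s1 = f 0.
Proof.
  intros H0 Hd.
  destruct (MVT_gen f 0 s1 (fun _ => 0)) as [c [_ Hc]].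
  - intros x Hx. rewrite Rmin_left in Hx by lra. rewrite Rmax_right in Hx by lra.
    apply Hd; lra.
  - intros x Hx. rewrite Rmin_left in Hx by lra. rewrite Rmax_right in Hx by lra.
    apply continuity_pt_filterlim. apply (ex_derive_continuous (K:=R_AbsRing) (V:=R_NormedModule)).
    eexists. apply Hd; lra.
  - lra.
Qed.

Lemma vkin_sq a tau chij chi t v : scale_factor a -> vkin a tau chij chi t v ->
  0 < a t /\ 0 < a tau /\ 1 - v ^ 2 = a t ^ 2 / a tau ^ 2.
Proof.
  intros Ha [T [X [dT [dX [s1 [W0 [W1 [[Hs1 [Hg [HT0 [HX0 [HdT0 [HdX0 [HT1 HX1]]]]]]]
     [Hp [HW0 [HW1 [Hv [HW00 HW10]]]]]]]]]]]]].
  assert (HT : forall s, 0 <= s <= s1 -> 0 < T s) by (intros s Hs; apply (Hg s Hs)).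
  assert (Hpos : forall s, 0 <= s <= s1 -> 0 < a (T s)).
  { intros s Hs. destruct Ha as [_ [Hp' _]]. apply Hp'. now apply HT. }
  assert (HaT : forall s, 0 <= s <= s1 ->
     is_derive (fun y => a (T y)) s (Derive a (T s) * dT s)).
  { intros s Hs. apply dcomp. apply deriv_a; auto. apply (Hg s Hs). }
  assert (EP : a (T s1) ^ 2 * dX s1 = a (T 0) ^ 2 * dX 0).
  { apply (const_on (fun s => a (T s) ^ 2 * dX s)); auto.
    intros s Hs. destruct (Hg s Hs) as [_ [_ [_ [_ HdX]]]].
    eapply dext. apply dmult. apply is_derive_pow. apply HaT; auto. exact HdX.
    simpl. specialize (Hpos s Hs). field. lra. }
  assert (EN : - dT s1 ^ 2 + a (T s1) ^ 2 * dX s1 ^ 2 = - dT 0 ^ 2 + a (T 0) ^ 2 * dX 0 ^ 2).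
  { apply (const_on (fun s => - dT s ^ 2 + a (T s) ^ 2 * dX s ^ 2)); auto.
    intros s Hs. destruct (Hg s Hs) as [_ [_ [_ [HddT HdX]]]].
    eapply dext. apply dplus. apply dopp. apply is_derive_pow. exact HddT.
    apply dmult. apply is_derive_pow. apply HaT; auto. apply is_derive_pow. exact HdX.
    simpl. specialize (Hpos s Hs). unfold plus, opp; simpl. field. lra. }
  assert (EQ : - dT s1 * W0 s1 + a (T s1) ^ 2 * dX s1 * W1 s1
             = - dT 0 * W0 0 + a (T 0) ^ 2 * dX 0 * W1 0).
  { apply (const_on (fun s => - dT s * W0 s + a (T s) ^ 2 * dX s * W1 s)); auto.
    intros s Hs. destruct (Hg s Hs) as [_ [_ [_ [HddT HdX]]]].
    destruct (Hp s Hs) as [HW0' HW1'].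
    eapply dext. apply dplus. apply dmult. apply dopp. exact HddT.
    exact HW0'. apply dmult. apply dmult. apply is_derive_pow. apply HaT; auto. exact HdX.
    exact HW1'.
    simpl. specialize (Hpos s Hs). unfold plus, opp; simpl. field. lra. }
  assert (HA : 0 < a tau) by (rewrite <- HT0; apply Hpos; lra).
  assert (HB : 0 < a t) by (rewrite <- HT1; apply Hpos; lra).
  rewrite HT0, HT1 in *. rewrite HdT0, HW0, HW1, HW10 in *.
  set (g := sqrt (1 - v ^ 2)) in *.
  assert (Hg0 : 0 < g) by (apply sqrt_lt_R0; lra).
  assert (Hg2 : g ^ 2 = 1 - v ^ 2) by (unfold g; rewrite <- Rsqr_pow2, Rsqr_sqrt; lra).
  set (A := a tau) in *. set (B := a t) in *.
  assert (E1 : dX s1 = A ^ 2 * dX 0 / B ^ 2) by (apply (Rmult_eq_reg_l (B^2)); [rewrite EP; field|]; nra).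
  assert (E2 : dT s1 = - A * dX 0 * v / g) by (field_simplify in EQ; [|lra..]; field_simplify; [nra|lra]).
  split; [exact HB|split; [exact HA|]].
  assert (E3 : A ^ 2 * dX 0 ^ 2 * (A ^ 2 / B ^ 2 - v ^ 2 / g ^ 2 - 1) = 0).
  { transitivity (B ^ 2 * dX s1 ^ 2 - dT s1 ^ 2 - A ^ 2 * dX 0 ^ 2).
    rewrite E1, E2. field. lra. lra. }
  apply Rmult_integral in E3. destruct E3 as [E3|E3].
  - exfalso. assert (0 < A ^ 2 * dX 0 ^ 2); [|lra].
    apply Rmult_lt_0_compat. nra. apply pow2_gt_0 in HdX0; lra.
  - rewrite <- Hg2. replace (v ^ 2) with (1 - g ^ 2) in E3 by lra.
    assert (E4 : A ^ 2 / B ^ 2 = 1 / g ^ 2).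
    { replace (1 / g ^ 2) with (A ^ 2 / B ^ 2 - (A ^ 2 / B ^ 2 - (1 - g ^ 2) / g ^ 2 - 1)) by (field; lra). lra. }
    replace (g ^ 2) with (1 / (1 / g ^ 2)) by (field; lra).
    rewrite <- E4. field. split; lra.
Qed.

Theorem theorem1 (a : R -> R) (chi1 chi2 : R) :
  scale_factor a ->
  (* Scenario I *)
  (forall tau0 tau1 tm tp v1 v2 v3,
     0 < tau0 ->
     orth_meets a tau0 0 tau1 chi1 ->
     orth_meets a tau0 0 tm chi2 ->
     orth_meets a tau1 chi1 tp chi2 ->
     vkin a tau0 0 chi1 tau1 v1 ->
     vkin a tau0 0 chi2 tm v3 ->
     vkin a tau1 chi1 chi2 tp v2 ->
     1 - v3 ^ 2 = (a tm ^ 2 / a tp ^ 2) * (1 - v1 ^ 2) * (1 - v2 ^ 2)) /\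
  (* Scenario II *)
  (forall tm tp tau1 tau2 v1 v2 v3,
     0 < tm -> 0 < tp ->
     orth_meets a tm 0 tau1 chi1 ->
     orth_meets a tau1 chi1 tau2 chi2 ->
     orth_meets a tp 0 tau2 chi2 ->
     vkin a tm 0 chi1 tau1 v1 ->
     vkin a tau1 chi1 chi2 tau2 v2 ->
     vkin a tp 0 chi2 tau2 v3 ->
     1 - v3 ^ 2 = (a tm ^ 2 / a tp ^ 2) * (1 - v1 ^ 2) * (1 - v2 ^ 2)) /\
  (* Scenario III *)
  (forall tau0 tp tau2 tm v1 v2 v3,
     0 < tau0 -> 0 < tm ->
     orth_meets a tau0 0 tp chi1 ->
     orth_meets a tau0 0 tau2 chi2 ->
     orth_meets a tm chi1 tau2 chi2 ->
     vkin a tau0 0 chi1 tp v1 ->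
     vkin a tm chi1 chi2 tau2 v2 ->
     vkin a tau0 0 chi2 tau2 v3 ->
     1 - v3 ^ 2 = (a tm ^ 2 / a tp ^ 2) * (1 - v1 ^ 2) * (1 - v2 ^ 2)).
Proof.
  intros Ha. split; [|split].
  - intros ? ? ? ? ? ? ? _ _ _ _ K1 K2 K3;
    destruct (vkin_sq _ _ _ _ _ _ Ha K1) as [P1 [Q1 R1]];
    destruct (vkin_sq _ _ _ _ _ _ Ha K2) as [P2 [Q2 R2]];
    destruct (vkin_sq _ _ _ _ _ _ Ha K3) as [P3 [Q3 R3]];
    rewrite R1, R2, R3; field; repeat split; lra.
  - intros ? ? ? ? ? ? ? _ _ _ _ _ K1 K2 K3;
    destruct (vkin_sq _ _ _ _ _ _ Ha K1) as [P1 [Q1 R1]];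
    destruct (vkin_sq _ _ _ _ _ _ Ha K2) as [P2 [Q2 R2]];
    destruct (vkin_sq _ _ _ _ _ _ Ha K3) as [P3 [Q3 R3]];
    rewrite R1, R2, R3; field; repeat split; lra.
  - intros ? ? ? ? ? ? ? _ _ _ _ _ K1 K2 K3;
    destruct (vkin_sq _ _ _ _ _ _ Ha K1) as [P1 [Q1 R1]];
    destruct (vkin_sq _ _ _ _ _ _ Ha K2) as [P2 [Q2 R2]];
    destruct (vkin_sq _ _ _ _ _ _ Ha K3) as [P3 [Q3 R3]];
    rewrite R1, R2, R3; field; repeat split; lra.
Qed.
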